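(* Let $K\ge 1$ and let $\mathcal A_\theta$ be an $L$-layer MinAgg GNN. If $h^{(L)}_{v_K}(H^{(0)}_K)\ne h^{(L)}_{u_K}(H^{(0)}_K)$, then $\mathcal A_\theta$ has at least $K$ edge-dependent message passing layers.
   Context: Attributed graphs: $G=(V,E,X_{\mathrm v},X_{\mathrm e})$ with $V$ finite, undirected edges, nonnegative edge weights and nonnegative node features; every node has a self-loop of weight $x_{(v,v)}=0$ and $\mathcal N(v)=\{v\}\cup\{u:\{u,v\}\in E\}$. A large constant $\beta>0$ encodes ''infinite distance''. The graph $H^{(0)}_K$: vertices $v_0,\dots,v_K,u_0,\dots,u_K$; edges $\{v_{i-1},v_i\}$, $\{u_{i-1},u_i\}$, $\{u_{i-1},v_i\}$, $\{v_{i-1},u_i\}$ for $i\in[K]$; weights $1$ on the edges $\{u_{i-1},v_i\}$ and $\{v_{i-1},u_i\}$ and $0$ on the edges $\{v_{i-1},v_i\}$, $\{u_{i-1},u_i\}$; node features $x_{v_0}=0$ and $x_w=\beta$ for all other $w$. An $m$-layer ReLU MLP computes $x^{(0)}=x$, $x^{(j)}=\sigma(W_jx^{(j-1)}+b_j)$ ($j\in[m]$), output $x^{(m)}$, $\sigma$ componentwise ReLU. MinAgg GNN: for each $\ell\in[L]$, ReLU MLPs $f^{\mathrm{agg},(\ell)}:\mathbb R^{d_{\ell-1}+1}\to\mathbb R^d$ and $f^{\mathrm{up},(\ell)}:\mathbb R^{d+d_{\ell-1}}\to\mathbb R^{d_\ell}$, $d_0=d_L=1$, $d_\ell=d$ otherwise;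 $h^{(0)}_v=x_v$ and $h^{(\ell)}_v=f^{\mathrm{up},(\ell)}\big(\min_{u\in\mathcal N(v)}f^{\mathrm{agg},(\ell)}(h^{(\ell-1)}_u\oplus x_{(u,v)})\oplus h^{(\ell-1)}_v\big)$ (coordinatewise min, $\oplus$ concatenation). The first $d_{\ell-1}$ input coordinates of $f^{\mathrm{agg},(\ell)}$ are its node component, the last its edge component. A function $f$ on $\mathbb R^n_{\ge0}$ depends on a set $S$ of coordinates if there are $x\ne y$ in $\mathbb R^n_{\ge 0}$ agreeing outside $S$ with $f(x)\neq f(y)$. Layer $\ell$ is message passing if $f^{\mathrm{agg},(\ell)}$ depends on its node component, and edge-dependent message passing if moreover $f^{\mathrm{agg},(\ell)}$ depends on its edge component. *)

(* Defs.v *)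
From HB Require Import structures.
From mathcomp Require Import all_boot all_order all_algebra.
From mathcomp Require Import reals.
Set Implicit Arguments.
Unset Strict Implicit.
Unset Printing Implicit Defensive.
Import Order.TTheory GRing.Theory Num.Theory.
Local Open Scope ring_scope.

Section Defs.
Variable R : realType.

Definition relu n (x : 'cV[R]_n) : 'cV[R]_n := \col_i Num.max (x i 0) 0.

Inductive mlp : nat -> nat -> Type :=
| MLP1 n m of 'M[R]_(m, n) & 'cV[R]_m : mlp n m
| MLPS n k m of 'M[R]_(k, n) & 'cV[R]_k & mlp k m : mlp n m.

Fixpoint mlp_eval n m (f : mlp n m) : 'cV[R]_n -> 'cV[R]_m :=
  match f in mlp n m return 'cV[R]_n -> 'cV[R]_m with
  | MLP1 _ _ W b => fun x => relu (W *m x + b)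
  | MLPS _ _ _ W b g => fun x => mlp_eval g (relu (W *m x + b))
  end.

Definition nonneg_vec n (x : 'cV[R]_n) : Prop := forall i, 0 <= x i 0.

Definition depends_on n m (f : 'cV[R]_n -> 'cV[R]_m) (S : {set 'I_n}) : Prop :=
  exists x y : 'cV[R]_n,
    [/\ nonneg_vec x, nonneg_vec y, x != y,
        (forall i, i \notin S -> x i 0 = y i 0) & f x != f y].

Definition node_comp n : {set 'I_(n + 1)} := [set lshift 1 i | i : 'I_n].
Definition edge_comp n : {set 'I_(n + 1)} := [set rshift n i | i : 'I_1].

Definition dimf (L d l : nat) : nat := if (l == 0%N) || (l == L) then 1%N else d.

(* An L-layer MinAgg GNN. Layer l+1 of the paper (l = 0, ..., L-1) is given by
   agg l : R^(d_l + 1) -> R^d and up l : R^(d + d_l) -> R^(d_(l+1)).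
   (Entries at indices l >= L are never used.) *)
Record MinAggGNN := {
  gnn_L : nat;
  gnn_d : nat;
  gnn_agg : forall l : nat, mlp (dimf gnn_L gnn_d l + 1) gnn_d;
  gnn_up : forall l : nat, mlp (gnn_d + dimf gnn_L gnn_d l) (dimf gnn_L gnn_d l.+1)
}.

(* layer with 1-based index l.+1 is (edge-dependent) message passing *)
Definition message_passing (A : MinAggGNN) (l : nat) : Prop :=
  depends_on (mlp_eval (gnn_agg A l)) (node_comp _).
Definition edge_dep_message_passing (A : MinAggGNN) (l : nat) : Prop :=
  message_passing A l /\ depends_on (mlp_eval (gnn_agg A l)) (edge_comp _).

Section Eval.
Variables (A : MinAggGNN) (V : finType) (adj : rel V)
          (ew : V -> V -> R) (x : V -> R).
Local Notation L := (gnn_L A).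
Local Notation d := (gnn_d A).

Definition nbhd (v : V) : {set V} := [set u | (u == v) || adj u v].

(* coordinatewise minimum of g over N(v) (N(v) is nonempty, contains v) *)
Definition cmin n (g : V -> 'cV[R]_n) (v : V) : 'cV[R]_n :=
  \col_i \big[Num.min/ g v i 0]_(u in nbhd v) g u i 0.

Definition gnn_layer (l : nat) (h : V -> 'cV[R]_(dimf L d l)) :
    V -> 'cV[R]_(dimf L d l.+1) :=
  fun v => mlp_eval (gnn_up A l)
     (col_mx (cmin (fun u => mlp_eval (gnn_agg A l) (col_mx (h u) (ew u v)%:M)) v)
             (h v)).

Fixpoint gnn_rep (l : nat) : V -> 'cV[R]_(dimf L d l) :=
  match l with
  | 0 => fun v => (x v)%:M
  | l'.+1 => gnn_layer (gnn_rep l')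
  end.
End Eval.

(* The graph H^(0)_K: (false, i) = v_i, (true, i) = u_i. *)
Definition HV (K : nat) : finType := (bool * 'I_K.+1)%type.
Definition Hadj (K : nat) : rel (HV K) :=
  fun a b => (val a.2 == (val b.2).+1) || (val b.2 == (val a.2).+1).
(* weight 1 on {u_(i-1), v_i}, {v_(i-1), u_i}; 0 on {v_(i-1),v_i}, {u_(i-1),u_i};
   0 on self-loops *)
Definition Hew (K : nat) : HV K -> HV K -> R :=
  fun a b => if a.1 == b.1 then 0 else 1.
Definition Hx (K : nat) (beta : R) : HV K -> R :=
  fun a => if (a.1 == false) && (val a.2 == 0%N) then 0 else beta.
Definition Hv (K : nat) (i : 'I_K.+1) : HV K := (false, i).
Definition Hu (K : nat) (i : 'I_K.+1) : HV K := (true, i).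

End Defs.

(* Main.v *)
From HB Require Import structures.
From mathcomp Require Import all_boot all_order all_algebra.
From mathcomp Require Import reals.
From Stdlib Require Import Classical.
From mathcomp Require Import zify.
Require Import Defs.
Import Order.TTheory GRing.Theory Num.Theory.
Local Open Scope ring_scope.
Set Implicit Arguments. Unset Strict Implicit. Unset Printing Implicit Defensive.
Section H.
Variable R : realType.

Lemma bigmin_le_seq (T : eqType) (s : seq T) (P : pred T) (F : T -> R) x u :
  u \in s -> P u -> \big[Num.min/x]_(i <- s | P i) F i <= F u.
Proof.
elim: s => // a s IH; rewrite inE big_cons => /orP[/eqP<- ->|us Pu].
  by rewrite ge_min lexx.
case: (P a); last exact: IH us Pu.
by rewrite ge_min (IH us Pu) orbT.
Qed.

Lemma bigmin_ge (T : eqType) (s : seq T) (P : pred T) (F : T -> R) x c :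
  c <= x -> (forall u, u \in s -> P u -> c <= F u) ->
  c <= \big[Num.min/x]_(i <- s | P i) F i.
Proof.
move=> cx H; elim: s H => [|a s IH] H; first by rewrite big_nil.
have H' : forall u, u \in s -> P u -> c <= F u.
  by move=> u us Pu; apply: H => //; rewrite inE us orbT.
rewrite big_cons; case Pa: (P a); last exact: IH.
by rewrite le_min H ?inE ?eqxx ?IH.
Qed.

Lemma cmin_eq (V : finType) (adj1 adj2 : rel V) n (g1 g2 : V -> 'cV[R]_n) v1 v2 :
  (forall u, u \in nbhd adj2 v2 -> exists2 u', u' \in nbhd adj1 v1 & g1 u' = g2 u) ->
  (forall u, u \in nbhd adj1 v1 -> exists2 u', u' \in nbhd adj2 v2 & g2 u' = g1 u) ->
  cmin adj1 g1 v1 = cmin adj2 g2 v2.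
Proof.
have vn : forall adj (v : V), v \in nbhd adj v by move=> adj v; rewrite inE eqxx.
have key : forall adj1 adj2 (g1 g2 : V -> 'cV[R]_n) v1 v2,
  (forall u, u \in nbhd adj2 v2 -> exists2 u', u' \in nbhd adj1 v1 & g1 u' = g2 u) ->
  forall i, cmin adj1 g1 v1 i 0 <= cmin adj2 g2 v2 i 0.
  move=> a1 a2 h1 h2 w1 w2 H i; rewrite !mxE.
  apply: bigmin_ge.
    have [u' u'in <-] := H _ (vn a2 w2).
    by apply: bigmin_le_seq => //; exact: mem_index_enum.
  move=> u _ uin; have [u' u'in <-] := H _ uin.
  by apply: bigmin_le_seq => //; exact: mem_index_enum.
move=> H1 H2; apply/matrixP => i j; rewrite (ord1 j).
by apply: le_anti; rewrite key // key.
Qed.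

Lemma mlp_nonneg n m (f : mlp R n m) x : nonneg_vec (mlp_eval f x).
Proof.
elim: f x => [n' m' W b|n' k m' W b g IH] x /=; last exact: IH.
by move=> i; rewrite mxE le_max lexx orbT.
Qed.

Lemma nodep n m (f : 'cV[R]_n -> 'cV[R]_m) S x y :
  ~ depends_on f S -> nonneg_vec x -> nonneg_vec y ->
  (forall i, i \notin S -> x i 0 = y i 0) -> f x = f y.
Proof.
move=> nd nx ny H; case: (eqVneq x y) => [->//|xy].
case: (eqVneq (f x) (f y)) => // fxy; case: nd; by exists x, y; split.
Qed.

End H.


Section Main.
Variables (R : realType) (beta : R) (K : nat) (A : MinAggGNN R).
Hypothesis beta_gt0 : 0 < beta.

Local Notation h := (gnn_rep A (@Hadj K) (@Hew R K) (@Hx R K beta)).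
Local Notation V := (HV K).

Lemma col_nonneg n (a : 'cV[R]_n) (w : 'cV[R]_1) :
  nonneg_vec a -> nonneg_vec w -> nonneg_vec (col_mx a w).
Proof.
move=> na nw i; rewrite -[i]splitK; case: (split i) => j /=; by rewrite ?col_mxEu ?col_mxEd.
Qed.

Lemma scal_nonneg (a : R) : 0 <= a -> nonneg_vec (a%:M : 'cV[R]_1).
Proof. by move=> a0 i; rewrite mxE (ord1 i) eqxx mulr1n. Qed.

Lemma Hew_ge0 (a b : V) : 0 <= Hew R a b.
Proof. by rewrite /Hew; case: ifP. Qed.

Lemma rep_nonneg l v : nonneg_vec (h l v).
Proof.
case: l => [|l] /=; last exact: mlp_nonneg.
apply: scal_nonneg; rewrite /Hx; case: ifP => // _; exact: ltW.
Qed.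

Lemma node_indep n m (f : mlp R (n + 1) m) (a b : 'cV[R]_n) (w : 'cV[R]_1) :
  ~ depends_on (mlp_eval f) (node_comp n) -> nonneg_vec a -> nonneg_vec b ->
  nonneg_vec w -> mlp_eval f (col_mx a w) = mlp_eval f (col_mx b w).
Proof.
move=> nd na nb nw; apply: (nodep nd); try exact: col_nonneg.
move=> i; rewrite -[i]splitK; case: (split i) => j /= iS.
  by case/negP: iS; apply/imsetP; exists j.
by rewrite !col_mxEd.
Qed.

Lemma edge_indep n m (f : mlp R (n + 1) m) (a : 'cV[R]_n) (w1 w2 : 'cV[R]_1) :
  ~ depends_on (mlp_eval f) (edge_comp n) -> nonneg_vec a -> nonneg_vec w1 ->
  nonneg_vec w2 -> mlp_eval f (col_mx a w1) = mlp_eval f (col_mx a w2).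
Proof.
move=> nd na nb nw; apply: (nodep nd); try exact: col_nonneg.
move=> i; rewrite -[i]splitK; case: (split i) => j /= iS.
  by rewrite !col_mxEu.
by case/negP: iS; apply/imsetP; exists j.
Qed.

Lemma nbhd_idx (w : V) b (i : 'I_K.+1) : w \in nbhd (@Hadj K) (b, i) ->
  [\/ w = (b, i), val w.2 = (val i).+1 | (val w.2).+1 = val i].
Proof.
rewrite inE => /orP[/eqP->|]; first by constructor 1.
by rewrite /Hadj /= => /orP[/eqP|/eqP]; [constructor 2|constructor 3].
Qed.

Lemma nbhd_swap (w : V) b (i : 'I_K.+1) : w \in nbhd (@Hadj K) (b, i) ->
  (~~ w.1, w.2) \in nbhd (@Hadj K) (~~ b, i).
Proof.
rewrite !inE => /orP[/eqP->|H]; first by rewrite eqxx.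
by apply/orP; right; move: H; rewrite /Hadj.
Qed.

Lemma Hew_swap (w : V) b (i : 'I_K.+1) :
  Hew R (~~ w.1, w.2) (~~ b, i) = Hew R w (b, i).
Proof. by rewrite /Hew /=; case: w.1; case: b. Qed.

Definition Tm l (b : bool) (i : 'I_K.+1) (w : V) :=
  mlp_eval (gnn_agg A l) (col_mx (h l w) (Hew R w (b, i))%:M).

Lemma rep_succ l (b : bool) (i : 'I_K.+1) :
  h l.+1 (b, i) = mlp_eval (gnn_up A l)
     (col_mx (cmin (@Hadj K) (Tm l b i) (b, i)) (h l (b, i))).
Proof. by []. Qed.


Definition Inv l e := forall j : 'I_K.+1, (e < j)%N -> h l (false, j) = h l (true, j).

Lemma inv_b l e b (j : 'I_K.+1) : Inv l e -> (e < j)%N -> h l (~~ b, j) = h l (b, j).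
Proof. by move=> I ej; case: b; rewrite /= I. Qed.

Lemma wit_edge l e b (i : 'I_K.+1) : Inv l e -> (e.+1 < i)%N ->
  forall w, w \in nbhd (@Hadj K) (b, i) ->
  exists2 w', w' \in nbhd (@Hadj K) (~~ b, i) & Tm l (~~ b) i w' = Tm l b i w.
Proof.
move=> I ei w wn; exists (~~ w.1, w.2); first exact: nbhd_swap.
rewrite /Tm Hew_swap; case: w wn => c j wn.
have ej : (e < j)%N.
  by case: (nbhd_idx wn) => [[_ ->]|/= H|/= H]; try lia.
by rewrite /= (inv_b c I ej).
Qed.

Lemma wit_node l b (i : 'I_K.+1) : ~ message_passing A l ->
  forall w, w \in nbhd (@Hadj K) (b, i) ->
  exists2 w', w' \in nbhd (@Hadj K) (~~ b, i) & Tm l (~~ b) i w' = Tm l b i w.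
Proof.
move=> nm w wn; exists (~~ w.1, w.2); first exact: nbhd_swap.
rewrite /Tm Hew_swap; apply: node_indep => //; try exact: rep_nonneg.
exact/scal_nonneg/Hew_ge0.
Qed.

Lemma wit_pi l e b (i : 'I_K.+1) : ~ depends_on (mlp_eval (gnn_agg A l)) (edge_comp _) ->
  Inv l e -> (e < i)%N ->
  forall w, w \in nbhd (@Hadj K) (b, i) ->
  exists2 w', w' \in nbhd (@Hadj K) (~~ b, i) & Tm l (~~ b) i w' = Tm l b i w.
Proof.
move=> ne I ei w wn; case: (eqVneq w (b, i)) => [->|wne].
  exists (~~ b, i); first by rewrite inE eqxx.
  by rewrite /Tm /Hew /= !eqxx (inv_b b I ei).
exists w.
  move: wn; rewrite !inE (negbTE wne) /= => ad; apply/orP; right; exact: ad.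
rewrite /Tm; apply: edge_indep => //; try exact: rep_nonneg;
  exact/scal_nonneg/Hew_ge0.
Qed.

Lemma step l e (i : 'I_K.+1) : Inv l e -> (e < i)%N ->
  (edge_dep_message_passing A l -> (e.+1 < i)%N) ->
  h l.+1 (false, i) = h l.+1 (true, i).
Proof.
move=> I ei Hed; rewrite !rep_succ (I _ ei); congr (mlp_eval _ (col_mx _ _)).
have W : forall b, forall w, w \in nbhd (@Hadj K) (b, i) ->
  exists2 w', w' \in nbhd (@Hadj K) (~~ b, i) & Tm l (~~ b) i w' = Tm l b i w.
  move=> b; case: (ltnP e.+1 i) => [ei'|ie]; first exact: wit_edge ei'.
  case: (classic (message_passing A l)) => [mp|nmp]; last exact: wit_node.
  case: (classic (depends_on (mlp_eval (gnn_agg A l)) (edge_comp _))) => [de|nde].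
    have := Hed (conj mp de); lia.
  exact: (wit_pi nde I ei).
by apply: cmin_eq; [exact: (W true) | exact: (W false)].
Qed.

Lemma inv_all l : (l <= gnn_L A)%N -> exists S : {set 'I_(gnn_L A)},
  [/\ (forall j, j \in S -> edge_dep_message_passing A j),
      (forall j : 'I_(gnn_L A), j \in S -> (j < l)%N) & Inv l #|S|].
Proof.
elim: l => [_|l IH lL].
  exists set0; split => //; first by move=> j; rewrite in_set0.
  by move=> j; rewrite in_set0.
  rewrite /Inv cards0 => j j0 /=; rewrite /Hx /=.
  by rewrite (gtn_eqF j0).
have [S [S1 S2 S3]] := IH (ltnW lL).
case: (classic (edge_dep_message_passing A l)) => [ed|ned].
  pose o := Ordinal lL.
  have oS : o \notin S by apply/negP => /S2 /=; rewrite ltnn.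
  exists (o |: S); split.
  - by move=> j; rewrite in_setU1 => /orP[/eqP->|]; [exact: ed|exact: S1].
  - by move=> j; rewrite in_setU1 => /orP[/eqP->//|/S2]; lia.
  - move=> j; rewrite cardsU1 oS /= add1n => ej.
    by apply: (step S3) => [|_]; [exact: ltnW ej|exact: ej].
exists S; split => //.
- by move=> j /S2; lia.
- move=> j ej; apply: (step S3) => // ed; by case: ned.
Qed.

End Main.

Theorem mainTheorem7 (R : realType) (beta : R) (K : nat) (A : MinAggGNN R) :
  0 < beta -> (1 <= K)%N ->
  gnn_rep A (@Hadj K) (@Hew R K) (@Hx R K beta) (gnn_L A) (@Hv K ord_max)
    != gnn_rep A (@Hadj K) (@Hew R K) (@Hx R K beta) (gnn_L A) (@Hu K ord_max) ->
  exists S : {set 'I_(gnn_L A)},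
    (K <= #|S|)%N /\ forall l : 'I_(gnn_L A), l \in S -> edge_dep_message_passing A l.
Proof.
move=> b0 K1 neq; have [S [S1 _ S3]] := @inv_all R beta K A b0 _ (leqnn (gnn_L A)).
exists S; split => //; case: (leqP K #|S|) => // SK.
by case/eqP: neq; apply: S3.
Qed.
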